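(* Let $g\in L_2(\mathbb{R}^d)$ and let $m_0(g):=\sup\{k\ge0: g\in H^k(\mathbb{R}^d)\}$ be its smoothness, and suppose $m_0(g)\in(d/2,+\infty)$. If $g\notin H^{m_0(g)}(\mathbb{R}^d)$, then there exists an increasing positive function $Q:\mathbb{R}_+\to\mathbb{R}_+$ satisfying $\lim_{s\to+\infty}\frac{\log Q(s)}{\log s}=0$ such that $$\int_{\mathbb{R}^d}\frac{|\mathcal{F}(g)(\omega)|^2}{Q(\|\omega\|)}(1+\|\omega\|^2)^{m_0(g)}d\omega\le 1,\qquad \int_{\mathbb{R}^d}\frac{|\mathcal{F}(g)(\omega)|^2}{Q(\|\omega\|)}(1+\|\omega\|^2)^{m_0(g)+\delta}d\omega=\infty\ \ \forall\delta>0.$$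
   Context: $H^k(\mathbb{R}^d)$ (for real $k\ge0$, possibly non-integer) is the Sobolev space of $g\in L_2(\mathbb{R}^d)$ with $\|g\|_{H^k(\mathbb{R}^d)}^2=\int_{\mathbb{R}^d}|\mathcal{F}(g)(\omega)|^2(1+\|\omega\|_2^2)^kd\omega<\infty$, where $\mathcal{F}(g)(\omega)=(2\pi)^{-d/2}\int g(x)e^{-ix^T\omega}dx$. *)

(* Defs.v *)
From HB Require Import structures.
From mathcomp Require Import all_boot all_order all_algebra.
From mathcomp Require Import all_classical all_reals all_analysis.
Import Order.TTheory GRing.Theory Num.Theory numFieldNormedType.Exports.
Set Implicit Arguments.
Unset Strict Implicit.
Unset Printing Implicit Defensive.
Local Open Scope classical_set_scope.
Local Open Scope ring_scope.

Definition dispR (R : realType) : measure_display := ltac:(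
  let t := type of (measurableTypeR R : measurableType _) in
  match t with Measurable.type ?d => exact d end).

Fixpoint dispn (R : realType) (n : nat) : measure_display :=
  match n with 0 => dispR R | n.+1 => measure_prod_display (dispn R n, dispR R) end.

(** [Rd R n] is R^(n+1) = (...((R * R) * R) ... * R) with the product sigma-algebra *)
Fixpoint Rd (R : realType) (n : nat) : measurableType (dispn R n) :=
  match n return measurableType (dispn R n) with
  | 0 => measurableTypeR R
  | n.+1 => (Rd R n * measurableTypeR R)%type end.

Fixpoint lebn (R : realType) (n : nat) : {measure set (Rd R n) -> \bar R} :=
  match n return {measure set (Rd R n) -> \bar R} with
  | 0 => @lebesgue_measure R
  | n.+1 => ((lebn R n) \x (@lebesgue_measure R))%E end.

Fixpoint dotn (R : realType) (n : nat) : Rd R n -> Rd R n -> R :=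
  match n return Rd R n -> Rd R n -> R with
  | 0 => fun x y => (x : R) * (y : R)
  | n.+1 => fun x y => dotn x.1 y.1 + (x.2 : R) * (y.2 : R) end.

(** R^d for d >= 1 *)
Definition Rpow (R : realType) (d : nat) := Rd R d.-1.
Definition leb (R : realType) (d : nat) : {measure set (Rpow R d) -> \bar R} :=
  lebn R d.-1.
Definition dot (R : realType) (d : nat) (x y : Rpow R d) : R := dotn x y.
Definition sqnorm2 (R : realType) (d : nat) (x : Rpow R d) : R := dot x x.
Definition norm2 (R : realType) (d : nat) (x : Rpow R d) : R := Num.sqrt (sqnorm2 x).

(** * L_2(R^d) for complex valued g = gr + i gi *)
Definition L2 (R : realType) (d : nat) (gr gi : Rpow R d -> R) : Prop :=
  measurable_fun setT gr /\ measurable_fun setT gi /\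
  (\int[leb R d]_x ((gr x ^+ 2 + gi x ^+ 2)%:E) < +oo)%E.

(** * Fourier(-Plancherel) transform on L_2 :
   F(g)(w) = (2 pi)^(-d/2) \int g(x) e^{-i x^T w} dx, understood (for g in L_2)
   as the L_2-limit of the transforms of the truncations g 1_{||x|| <= n}. *)
Definition fourier_trunc_re (R : realType) (d : nat) (gr gi : Rpow R d -> R)
    (n : nat) (w : Rpow R d) : R :=
  (2 * pi) `^ (- (d%:R / 2)) *
  Rintegral (leb R d) [set x | norm2 x <= n%:R]
    (fun x => gr x * cos (dot x w) + gi x * sin (dot x w)).

Definition fourier_trunc_im (R : realType) (d : nat) (gr gi : Rpow R d -> R)
    (n : nat) (w : Rpow R d) : R :=
  (2 * pi) `^ (- (d%:R / 2)) *
  Rintegral (leb R d) [set x | norm2 x <= n%:R]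
    (fun x => gi x * cos (dot x w) - gr x * sin (dot x w)).

Definition is_fourier (R : realType) (d : nat) (gr gi Fr Fi : Rpow R d -> R) : Prop :=
  measurable_fun setT Fr /\ measurable_fun setT Fi /\
  (\int[leb R d]_w (((Fr w - fourier_trunc_re gr gi n w) ^+ 2
                    + (Fi w - fourier_trunc_im gr gi n w) ^+ 2)%:E))%E
     @[n --> \oo] --> 0%E.

Definition inH (R : realType) (d : nat) (gr gi : Rpow R d -> R) (k : R) : Prop :=
  L2 gr gi /\
  exists Fr Fi, is_fourier gr gi Fr Fi /\
    (\int[leb R d]_w (((Fr w ^+ 2 + Fi w ^+ 2) * (1 + sqnorm2 w) `^ k)%:E) < +oo)%E.

Definition smoothness (R : realType) (d : nat) (gr gi : Rpow R d -> R) : \bar R :=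
  ereal_sup [set k%:E | k in [set k : R | 0 <= k /\ inH gr gi k]].

(* Main.v *)
Require Import Defs.
From HB Require Import structures.
From mathcomp Require Import all_boot all_order all_algebra.
From mathcomp Require Import all_classical all_reals all_analysis.
Import Order.TTheory GRing.Theory Num.Theory numFieldNormedType.Exports.
From mathcomp Require Import measurable_realfun ring lra.
Local Open Scope classical_set_scope.
Local Open Scope ring_scope.
Set Implicit Arguments.
Unset Strict Implicit.
Unset Printing Implicit Defensive.

Lemma dotn_ge0 (R : realType) n (x : Rd R n) : 0 <= dotn x x.
Proof.
elim: n x => [|n IH] x /=; first exact: sqr_ge0.
by rewrite addr_ge0 ?IH //; exact: sqr_ge0.
Qed.

Lemma measurable_dotn (R : realType) d' (T : measurableType d') n (f g : T -> Rd R n) :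
  measurable_fun setT f -> measurable_fun setT g ->
  measurable_fun setT (fun t => dotn (f t) (g t)).
Proof.
elim: n f g => [|n IH] f g mf mg /=.
  exact: measurable_funM.
apply: measurable_funD.
  apply: IH; exact: measurableT_comp measurable_fst _.
by apply: measurable_funM; exact: measurableT_comp measurable_snd _.
Qed.

Definition lebS (R : realType) n : set (Rd R n) -> \bar R := lebn R n.
Arguments lebS : clear implicits.
HB.instance Definition _ (RR : realType) (k : nat) := Measure.copy (lebS RR k) (lebn RR k).

Section SF.
Variables (R : realType) (n : nat).
Variable IH : sigma_finite setT (lebS R n).
Lemma lebn_sf_step : sigma_finite setT (lebS R n.+1).
Proof.
have /sigma_finiteP[F [TF ndF Foo]] := IH.
have /sigma_finiteP[G [TG ndG Goo]] := sigma_finiteT (@lebesgue_measure R).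
exists (fun n => F n `*` G n).
 rewrite -setXTT TF TG predeqE => -[x y]; split.
    move=> [/= [n0 _ Fnx] [k _ Gky]]; exists (maxn n0 k) => //; split.
    - by move: x Fnx; exact/subsetPset/ndF/leq_maxl.
    - by move: y Gky; exact/subsetPset/ndG/leq_maxr.
  by move=> [n0 _ []/= ? ?]; split; exists n0.
move=> k; have [? ?] := Foo k; have [? ?] := Goo k.
split; first exact: measurableX.
by rewrite /lebS /= product_measure1E// lte_mul_pinfty// ge0_fin_numE.
Qed.
End SF.

Lemma lebn_sf (R : realType) n : sigma_finite setT (lebS R n).
Proof.
elim: n => [|n IH]; first exact: (@sigma_finiteT _ _ _ (@lebesgue_measure R)).
exact: lebn_sf_step.
Qed.

HB.instance Definition _ (R : realType) (n : nat) :=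
  Measure_isSigmaFinite.Build _ _ _ (lebS R n) (lebn_sf R n).


Lemma meas_param (R : realType) d1 d2 (T1 : measurableType d1) (T2 : measurableType d2)
  (m2 : {sigma_finite_measure set T2 -> \bar R}) (F : (T1 * T2)%type -> \bar R) :
  measurable_fun setT F -> measurable_fun setT (fun x => \int[m2]_y F (x, y))%E.
Proof.
move=> mF.
have mA : measurable_fun setT (fubini_F m2 (funepos F)).
  apply: measurable_fun_fubini_tonelli_F; first exact: measurable_funepos.
  by move=> x; exact: funepos_ge0.
have mB : measurable_fun setT (fubini_F m2 (funeneg F)).
  apply: measurable_fun_fubini_tonelli_F; first exact: measurable_funeneg.
  by move=> x; exact: funeneg_ge0.
have := emeasurable_funB mA mB.
apply: eq_measurable_fun => x _.
rewrite /fubini_F [RHS]integralE.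
by congr (_ + (- _))%E; apply: eq_integral => y _; rewrite ?funeposE ?funenegE.
Qed.

Lemma meas_trunc (R : realType) n (B : set (Rd R n)) (mB : measurable B)
    (h : Rd R n * Rd R n -> R) :
  measurable_fun setT h ->
  measurable_fun setT (fun w => Rintegral (lebn R n) B (fun x => h (w, x))).
Proof.
move=> mh; rewrite /Rintegral.
apply: measurableT_comp (fine_measurable measurableT) _.
rewrite [X in measurable_fun _ X](_ : _ =
   fun w => \int[lebS R n]_y ((fun p => (h p * \1_B p.2)%:E) (w, y)))%E; last first.
  apply/funext => w; rewrite integral_mkcond; apply: eq_integral => x _.
  by rewrite patchE indicE; case: ifP => xB /=; rewrite ?mulr1 ?mulr0.
have := @meas_param R _ _ _ _ (lebS R n) (fun p => (h p * \1_B p.2)%:E).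
apply.
apply/measurable_EFinP.
apply: measurable_funM => //.
have mi : measurable_fun setT (\1_B : Rd R n -> R) by exact: measurable_indic.
exact: (measurableT_comp mi measurable_snd).
Qed.

Lemma measurable_sqnorm2 (R : realType) d : measurable_fun setT (@sqnorm2 R d).
Proof. exact: measurable_dotn. Qed.

Lemma measurable_norm2 (R : realType) d : measurable_fun setT (@norm2 R d).
Proof.
have ms : measurable_fun setT (@Num.sqrt R).
  by apply: nondecreasing_measurable => //; exact: ler_wsqrtr.
exact: measurableT_comp ms (@measurable_sqnorm2 R d).
Qed.

Lemma measurable_le_set d' (T : measurableType d') (R : realType) (f : T -> R) (c : R) :
  measurable_fun setT f -> measurable [set x | f x <= c].
Proof.
move=> mf; have := mf measurableT _ (measurable_itv `]-oo, c]).
rewrite setTI; congr measurable; apply/seteqP; split => x /=; by rewrite in_itv.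
Qed.

Lemma measurable_trunc_re (R : realType) d (gr gi : Rpow R d -> R) n :
  measurable_fun setT gr -> measurable_fun setT gi ->
  measurable_fun setT (fourier_trunc_re gr gi n).
Proof.
move=> mgr mgi; apply: measurable_funM => //.
have mB : measurable [set x : Rpow R d | norm2 x <= n%:R].
  by apply: measurable_le_set; exact: measurable_norm2.
have mdot : measurable_fun setT (fun p : (Rd R d.-1 * Rd R d.-1)%type => dotn p.2 p.1).
  by apply: measurable_dotn; [exact: measurable_snd|exact: measurable_fst].
apply: (@meas_trunc R d.-1 _ mB (fun p => gr p.2 * cos (dotn p.2 p.1) + gi p.2 * sin (dotn p.2 p.1))).
apply: measurable_funD; apply: measurable_funM.
- exact: measurableT_comp mgr measurable_snd.
- exact: measurableT_comp (continuous_measurable_fun (@continuous_cos R)) mdot.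
- exact: measurableT_comp mgi measurable_snd.
- exact: measurableT_comp (continuous_measurable_fun (@continuous_sin R)) mdot.
Qed.

Lemma measurable_trunc_im (R : realType) d (gr gi : Rpow R d -> R) n :
  measurable_fun setT gr -> measurable_fun setT gi ->
  measurable_fun setT (fourier_trunc_im gr gi n).
Proof.
move=> mgr mgi; apply: measurable_funM => //.
have mB : measurable [set x : Rpow R d | norm2 x <= n%:R].
  by apply: measurable_le_set; exact: measurable_norm2.
have mdot : measurable_fun setT (fun p : (Rd R d.-1 * Rd R d.-1)%type => dotn p.2 p.1).
  by apply: measurable_dotn; [exact: measurable_snd|exact: measurable_fst].
apply: (@meas_trunc R d.-1 _ mB (fun p => gi p.2 * cos (dotn p.2 p.1) - gr p.2 * sin (dotn p.2 p.1))).
apply: measurable_funB; apply: measurable_funM.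
- exact: measurableT_comp mgi measurable_snd.
- exact: measurableT_comp (continuous_measurable_fun (@continuous_cos R)) mdot.
- exact: measurableT_comp mgr measurable_snd.
- exact: measurableT_comp (continuous_measurable_fun (@continuous_sin R)) mdot.
Qed.

Lemma sq_tri (R : realType) (a b t : R) : (a - b) ^+ 2 <= 2 * (a - t) ^+ 2 + 2 * (b - t) ^+ 2.
Proof.
have := sqr_ge0 (a + b - 2 * t).
move=> h; rewrite -subr_ge0.
have -> : 2 * (a - t) ^+ 2 + 2 * (b - t) ^+ 2 - (a - b) ^+ 2 = (a + b - 2 * t) ^+ 2 by ring.
exact: h.
Qed.

Lemma fourier_ae (R : realType) d (gr gi Fr Fi Fr' Fi' : Rpow R d -> R) :
  L2 gr gi -> is_fourier gr gi Fr Fi -> is_fourier gr gi Fr' Fi' ->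
  ae_eq (leb R d) setT (fun w => Fr w ^+ 2 + Fi w ^+ 2) (fun w => Fr' w ^+ 2 + Fi' w ^+ 2).
Proof.
move=> [mgr [mgi _]] [mFr [mFi cF]] [mFr' [mFi' cF']].
set t := fourier_trunc_re gr gi; set s := fourier_trunc_im gr gi.
pose D w := ((Fr w - Fr' w) ^+ 2 + (Fi w - Fi' w) ^+ 2)%:E.
pose A n w := ((Fr w - t n w) ^+ 2 + (Fi w - s n w) ^+ 2)%:E.
pose A' n w := ((Fr' w - t n w) ^+ 2 + (Fi' w - s n w) ^+ 2)%:E.
have mt n : measurable_fun setT (t n) by exact: measurable_trunc_re.
have ms n : measurable_fun setT (s n) by exact: measurable_trunc_im.
have mA n : measurable_fun setT (A n).
  apply/measurable_EFinP; apply: measurable_funD; apply: measurable_funM;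
    by apply: measurable_funB.
have mA' n : measurable_fun setT (A' n).
  apply/measurable_EFinP; apply: measurable_funD; apply: measurable_funM;
    by apply: measurable_funB.
have mD : measurable_fun setT D.
  apply/measurable_EFinP; apply: measurable_funD; apply: measurable_funM;
    by apply: measurable_funB.
have A0 n w : (0 <= A n w)%E by rewrite lee_fin addr_ge0 // sqr_ge0.
have A0' n w : (0 <= A' n w)%E by rewrite lee_fin addr_ge0 // sqr_ge0.
have D0 w : (0 <= D w)%E by rewrite lee_fin addr_ge0 // sqr_ge0.
have Dle n : (\int[leb R d]_w D w <=
    2%:E * \int[leb R d]_w A n w + 2%:E * \int[leb R d]_w A' n w)%E.
  rewrite -!ge0_integralZl_EFin // -ge0_integralD //; last 4 first.
  - by move=> w _; rewrite mule_ge0.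
  - exact: emeasurable_funM (measurable_cst _) (mA n).
  - by move=> w _; rewrite mule_ge0.
  - exact: emeasurable_funM (measurable_cst _) (mA' n).
  apply: ge0_le_integral => //.
  - apply: emeasurable_funD; exact: emeasurable_funM (measurable_cst _) _.
  - move=> w _; rewrite /D /A /A' -!EFinM -EFinD lee_fin.
    have h1 := sq_tri (Fr w) (Fr' w) (t n w).
    have h2 := sq_tri (Fi w) (Fi' w) (s n w).
    lra.
have cu : (2%:E * \int[leb R d]_w A n w + 2%:E * \int[leb R d]_w A' n w)%E
     @[n --> \oo] --> (2%:E * 0 + 2%:E * 0)%E.
  apply: cvgeD => //; apply: cvgeZl => //.
have Dle0 : (\int[leb R d]_w D w <= 0)%E.
  have Hn : \forall n \near \oo, (\int[leb R d]_w D w <=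
    2%:E * \int[leb R d]_w A n w + 2%:E * \int[leb R d]_w A' n w)%E.
    by apply: nearW.
  have := @lime_ge _ _ _ _ (\int[leb R d]_w D w) _ (cvgP _ cu) Hn.
  by rewrite (cvg_lim _ cu) // !mule0 adde0; apply; exact: nat_filter_proper.
have D0i : (\int[leb R d]_w `|D w| = 0)%E.
  apply/eqP; rewrite eq_le integral_ge0 ?andbT //.
  by rewrite (eq_integral D) // => w _; rewrite gee0_abs.
have := (ae_eq_integral_abs _ measurableT mD).1 D0i.
apply: filterS => w /[apply] /= /eqP; rewrite eqe => /eqP H.
have h1 : (Fr w - Fr' w) ^+ 2 = 0.
  apply/eqP; rewrite eq_le sqr_ge0 andbT -H lerDl; exact: sqr_ge0.
have h2 : (Fi w - Fi' w) ^+ 2 = 0.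
  apply/eqP; rewrite eq_le sqr_ge0 andbT -H lerDr; exact: sqr_ge0.
move/eqP: h1; rewrite sqrf_eq0 subr_eq0 => /eqP ->.
by move/eqP: h2; rewrite sqrf_eq0 subr_eq0 => /eqP ->.
Qed.

Lemma geo_sum1 (R : realType) : (\sum_(j <oo) (1 / (2 ^ (j + 1))%:R : R)%:E = 1)%E.
Proof.
have h := @cvg_geometric_eseries_half R 1 0.
rewrite expr0 divr1 in h.
by apply: cvg_lim => //.
Qed.

Section Qcons.
Variables (R : realType) (c : nat -> R).
Hypothesis c0 : forall j, 0 < c j.
Hypothesis c1 : forall j, c j <= 1 / (2 ^ (j + 1))%:R.

Definition eps (j : nat) : R := (j.+1%:R)^-1.
Definition bb (u : R) : R := Num.max u 1.
Definition term j u : R := c j / bb u `^ eps j.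
Definition Sser u : \bar R := (\sum_(j <oo) (term j u)%:E)%E.
Definition iq u : R := fine (Sser u) / (2 - (bb u)^-1).
Definition Qf (s : R) : R := (iq (1 + s ^+ 2))^-1.

Lemma eps_gt0 j : 0 < eps j.
Proof. by rewrite /eps invr_gt0 ltr0n. Qed.

Lemma bb_ge1 u : 1 <= bb u.
Proof. by rewrite /bb le_max lexx orbT. Qed.

Lemma bb_gt0 u : 0 < bb u.
Proof. exact: lt_le_trans ltr01 (bb_ge1 u). Qed.

Lemma powbb_ge1 u j : 1 <= bb u `^ eps j.
Proof.
rewrite -(powRr0 (bb u)); apply: ler_powR; first exact: bb_ge1.
exact: ltW (eps_gt0 j).
Qed.

Lemma term_gt0 j u : 0 < term j u.
Proof. by rewrite /term divr_gt0 // powR_gt0 // bb_gt0. Qed.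

Lemma term_le j u : term j u <= 1 / (2 ^ (j + 1))%:R.
Proof.
apply: le_trans (c1 j); rewrite /term ler_pdivrMr ?(lt_le_trans ltr01) ?powbb_ge1 //.
by rewrite ler_peMr ?(ltW (c0 j)) ?powbb_ge1.
Qed.

Lemma Sser_ge0 u : (0 <= Sser u)%E.
Proof. by apply: nneseries_ge0 => n _ _; rewrite lee_fin ltW // term_gt0. Qed.

Lemma Sser_le1 u : (Sser u <= 1)%E.
Proof.
rewrite -(geo_sum1 R); apply: lee_nneseries => [n _ _|n _].
  by rewrite lee_fin ltW // term_gt0.
by rewrite lee_fin term_le.
Qed.

Lemma Sser_fin u : Sser u \is a fin_num.
Proof. by rewrite ge0_fin_numE ?Sser_ge0 // (le_lt_trans (Sser_le1 u)) ?ltry. Qed.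

Lemma Sser_ge_term j u : ((term j u)%:E <= Sser u)%E.
Proof.
apply: le_trans (nneseries_lim_ge j.+1 _); last first.
  by move=> n _ _; rewrite lee_fin ltW // term_gt0.
rewrite big_nat_recr //= leeDr //; apply: sume_ge0 => n _.
by rewrite lee_fin ltW // term_gt0.
Qed.

Lemma term_ni j : {homo term j : u v /~ v <= u}.
Proof.
move=> u v uv; rewrite /term ler_pM2l ?c0 // lef_pV2 ?posrE ?powR_gt0 ?bb_gt0 //.
apply: ge0_ler_powR; rewrite ?nnegrE ?(ltW (eps_gt0 j)) ?(ltW (bb_gt0 _)) //.
by rewrite /bb ge_max !le_max uv lexx /= orbT.
Qed.

Definition den u : R := 2 - (bb u)^-1.

Lemma den_ge1 u : 1 <= den u.
Proof.
rewrite /den lerBrDl -lerBrDr (_ : 2 - 1 = 1 :> R); last by lra.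
by rewrite invf_le1 ?bb_gt0 ?bb_ge1.
Qed.

Lemma den_le2 u : den u <= 2.
Proof. by rewrite /den lerBlDr lerDl invr_ge0 ltW // bb_gt0. Qed.

Lemma den_gt0 u : 0 < den u.
Proof. exact: lt_le_trans ltr01 (den_ge1 u). Qed.

Lemma fS_ge j u : term j u <= fine (Sser u).
Proof. by rewrite -lee_fin fineK ?Sser_fin ?Sser_ge_term. Qed.

Lemma fS_gt0 u : 0 < fine (Sser u).
Proof. exact: lt_le_trans (term_gt0 0 u) (fS_ge 0 u). Qed.

Lemma fS_le1 u : fine (Sser u) <= 1.
Proof. by rewrite -lee_fin fineK ?Sser_fin ?Sser_le1. Qed.

Lemma iq_gt0 u : 0 < iq u.
Proof. by rewrite /iq divr_gt0 ?fS_gt0 // den_gt0. Qed.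

Lemma iq_le_fS u : iq u <= fine (Sser u).
Proof.
rewrite /iq ler_pdivrMr ?den_gt0 //.
by rewrite ler_peMr ?(ltW (fS_gt0 u)) ?den_ge1.
Qed.

Lemma iq_le1 u : iq u <= 1.
Proof. exact: le_trans (iq_le_fS u) (fS_le1 u). Qed.

Lemma iq_ge j u : term j u / 2 <= iq u.
Proof.
rewrite /iq ler_pM ?(ltW (term_gt0 j u)) ?invr_ge0 ?fS_ge //.
by rewrite lef_pV2 ?posrE ?den_gt0 ?den_le2.
Qed.

Lemma fS_ni u v : u <= v -> fine (Sser v) <= fine (Sser u).
Proof.
move=> uv; rewrite -lee_fin !fineK ?Sser_fin //.
apply: lee_nneseries => [n _ _|n _]; first by rewrite lee_fin ltW // term_gt0.
by rewrite lee_fin term_ni.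
Qed.

Lemma bb_nd u v : u <= v -> bb u <= bb v.
Proof. by move=> uv; rewrite /bb ge_max !le_max uv lexx /= orbT. Qed.

Lemma den_nd u v : u <= v -> den u <= den v.
Proof.
move=> uv; rewrite /den lerD2l lerN2 lef_pV2 ?posrE ?bb_gt0 //.
exact: bb_nd.
Qed.

Lemma iq_ni : {homo iq : u v /~ v <= u}.
Proof.
move=> u v uv; rewrite /iq ler_pM ?(ltW (fS_gt0 _)) ?invr_ge0 ?(ltW (den_gt0 _)) ?fS_ni //.
by rewrite lef_pV2 ?posrE ?den_gt0 ?den_nd.
Qed.

Lemma iq_lt u v : 1 <= u -> u < v -> iq v < iq u.
Proof.
move=> u1 uv.
have bu : bb u = u by rewrite /bb max_l.
have bv : bb v = v by rewrite /bb max_l // (le_trans u1) // ltW.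
have dlt : den u < den v.
  rewrite /den ltrD2l ltrN2 bu bv ltf_pV2 ?posrE //.
  - exact: lt_le_trans ltr01 (le_trans u1 (ltW uv)).
  - exact: lt_le_trans ltr01 u1.
rewrite /iq (@le_lt_trans _ _ (fine (Sser u) / den v)) //.
  by rewrite ler_pM2r ?invr_gt0 ?den_gt0 // fS_ni // ltW.
by rewrite ltr_pM2l ?fS_gt0 // ltf_pV2 ?posrE ?den_gt0.
Qed.

Lemma Qf_gt0 s : 0 < Qf s.
Proof. by rewrite /Qf invr_gt0 iq_gt0. Qed.

Lemma Qf_ge1 s : 1 <= Qf s.
Proof. by rewrite /Qf invf_ge1 ?iq_gt0 ?iq_le1. Qed.

Lemma Qf_lt s t : 0 <= s -> s < t -> Qf s < Qf t.
Proof.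
move=> s0 st; rewrite /Qf ltf_pV2 ?posrE ?iq_gt0 //; apply: iq_lt.
  by rewrite lerDl sqr_ge0.
by rewrite ltrD2l; nra.
Qed.

Lemma Qf_le j s : Qf s <= 2 * bb (1 + s ^+ 2) `^ eps j / c j.
Proof.
have h := iq_ge j (1 + s ^+ 2).
rewrite /Qf -[X in _ <= X]invrK lef_pV2 ?posrE ?iq_gt0 //; last first.
  by rewrite invr_gt0 divr_gt0 ?c0 // mulr_gt0 // powR_gt0 // bb_gt0.
suff -> : (2 * bb (1 + s ^+ 2) `^ eps j / c j)^-1 = term j (1 + s ^+ 2) / 2 by [].
have p0 : bb (1 + s ^+ 2) `^ eps j != 0 by rewrite gt_eqF // powR_gt0 // bb_gt0.
have q0 : c j != 0 by rewrite gt_eqF // c0.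
rewrite /term; field.
by rewrite p0 q0.
Qed.

Lemma Qf_lim : (fun s => ln (Qf s) / ln s) x @[x --> +oo] --> 0.
Proof.
apply/cvgrPdist_lt => e e0.
pose j := Num.truncn (4 / e).
have ej : eps j < e / 4.
  rewrite /eps -[X in _ < X]invf_div ltf_pV2 ?posrE ?divr_gt0 //.
  exact: truncnS_gt.
have ln20 : 0 <= ln (2 : R) by rewrite ln_ge0 // ler1n.
pose K := 2 * ln (2 : R) + `|ln (c j)|.
have K0 : 0 <= K by rewrite addr_ge0 // mulr_ge0.
pose a := 2 * K / e + 1.
have a0 : 0 < a by rewrite /a ltr_wpDl // divr_ge0 // ?mulr_ge0 // ltW.
exists (expR a); split; first exact: num_real.
move=> s Ms.
have s1 : 1 < s by apply: lt_trans Ms; rewrite expR_gt1.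
have s0 : 0 < s by apply: lt_trans s1.
have lsa : a < ln s.
  by rewrite -[X in X < _](expRK a) ltr_ln ?posrE ?expR_gt0.
have ls0 : 0 < ln s by apply: lt_trans lsa.
have Q1 := Qf_ge1 s.
have lQ0 : 0 <= ln (Qf s) by rewrite ln_ge0.
have bE : bb (1 + s ^+ 2) = 1 + s ^+ 2.
  by rewrite /bb max_l // lerDl sqr_ge0.
have bpos : 0 < 1 + s ^+ 2 by rewrite ltr_pwDl // sqr_ge0.
have lb : ln (1 + s ^+ 2) <= ln 2 + 2 * ln s.
  have -> : 2 * ln s = ln (s ^+ 2) by rewrite lnXn // mulr_natl.
  rewrite -lnM ?posrE ?exprn_gt0 //.
  rewrite ler_ln ?posrE ?mulr_gt0 ?exprn_gt0 //.
  have : 1 <= s ^+ 2 by rewrite expr_ge1 // ltW.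
  lra.
have lQ : ln (Qf s) <= ln 2 + eps j * ln (1 + s ^+ 2) - ln (c j).
  have cpos := c0 j.
  have ppos : 0 < (1 + s ^+ 2) `^ eps j by rewrite powR_gt0.
  have := Qf_le j s; rewrite bE => H.
  rewrite -(ler_ln (Qf_gt0 s)) in H; last first.
    by rewrite posrE divr_gt0 // mulr_gt0.
  apply: le_trans H _.
  rewrite ln_div ?posrE ?mulr_gt0 // lnM ?posrE // ln_powR.
  by [].
have e1 : eps j <= 1 by rewrite /eps invf_le1 // ler1n.
have ej0 := eps_gt0 j.
have lQ2 : ln (Qf s) <= K + 2 * eps j * ln s.
  apply: le_trans lQ _.
  have h1 : eps j * ln (1 + s ^+ 2) <= eps j * (ln 2 + 2 * ln s).
    by rewrite ler_pM2l.
  have h2 : eps j * ln 2 <= ln 2 by rewrite ler_piMl.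
  have h3 : - ln (c j) <= `|ln (c j)| by rewrite -normrN ler_norm.
  rewrite /K; nra.
rewrite sub0r normrN ger0_norm ?divr_ge0 ?(ltW ls0) //.
rewrite ltr_pdivrMr //.
have h4 : 2 * K < e * ln s.
  have : e * a < e * ln s by rewrite ltr_pM2l.
  rewrite /a mulrDr mulrCA mulfV ?gt_eqF // mulr1; lra.
have h5 : 2 * eps j * ln s < e / 2 * ln s.
  by rewrite ltr_pM2r //; lra.
lra.
Qed.

End Qcons.

Lemma int_repr (R : realType) d (gr gi Fr Fi Fr' Fi' psi : Rpow R d -> R) :
  L2 gr gi -> is_fourier gr gi Fr Fi -> is_fourier gr gi Fr' Fi' ->
  measurable_fun setT psi ->
  (\int[leb R d]_w ((Fr w ^+ 2 + Fi w ^+ 2) * psi w)%:E =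
   \int[leb R d]_w ((Fr' w ^+ 2 + Fi' w ^+ 2) * psi w)%:E)%E.
Proof.
move=> hg hf hf' mpsi.
have [mFr [mFi _]] := hf; have [mFr' [mFi' _]] := hf'.
apply: ae_eq_integral => //.
- apply/measurable_EFinP; apply: measurable_funM => //.
  by apply: measurable_funD; apply: measurable_funM.
- apply/measurable_EFinP; apply: measurable_funM => //.
  by apply: measurable_funD; apply: measurable_funM.
- have := fourier_ae hg hf hf'.
  by apply: filterS => w /[apply] /= ->.
Qed.

Theorem lemma1 (R : realType) (d : nat) (gr gi : Rpow R d -> R) (m0 : R)
  (hd : (0 < d)%N)
  (hg : L2 gr gi)
  (hm0 : smoothness gr gi = m0%:E)
  (hm0d : d%:R / 2 < m0)
  (hnot : ~ inH gr gi m0) :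
  exists Q : R -> R,
    (forall s, 0 <= s -> 0 < Q s) /\
    (forall s t, 0 <= s -> s < t -> Q s < Q t) /\
    (fun s => ln (Q s) / ln s) x @[x --> +oo] --> 0 /\
    (forall Fr Fi : Rpow R d -> R, is_fourier gr gi Fr Fi ->
      (\int[leb R d]_w
         (((Fr w ^+ 2 + Fi w ^+ 2) / Q (norm2 w) * (1 + sqnorm2 w) `^ m0)%:E)
         <= 1)%E /\
      (forall delta : R, 0 < delta ->
        (\int[leb R d]_w
          (((Fr w ^+ 2 + Fi w ^+ 2) / Q (norm2 w)
             * (1 + sqnorm2 w) `^ (m0 + delta))%:E) = +oo)%E)).
Proof.
have [mgr [mgi _]] := hg.
pose phi (w : Rpow R d) := 1 + sqnorm2 w.
have phi1 w : 1 <= phi w by rewrite lerDl; exact: dotn_ge0.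
have phi0 w : 0 < phi w by exact: lt_le_trans ltr01 (phi1 w).
have mphi : measurable_fun setT phi.
  by apply: measurable_funD => //; exact: measurable_sqnorm2.
have mpow k : measurable_fun setT (fun w => phi w `^ k).
  exact: measurableT_comp (measurable_powR k) mphi.
have hsup j : exists k, [/\ 0 <= k, inH gr gi k & m0 - eps R j < k].
  have : ((m0 - eps R j)%:E < smoothness gr gi)%E.
    by rewrite hm0 lte_fin ltrBlDr ltrDl eps_gt0.
  move/ereal_sup_gt => [_ [k [k0 hk] <-]]; rewrite lte_fin => hlt.
  by exists k; split.
have [k0 [_ [_ [Fr0 [Fi0 [fF0 _]]]] _]] := hsup 0%N.
have [mFr0 [mFi0 _]] := fF0.
pose P0 w := Fr0 w ^+ 2 + Fi0 w ^+ 2.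
have P00 w : 0 <= P0 w by rewrite addr_ge0 // sqr_ge0.
have mP0 : measurable_fun setT P0.
  by apply: measurable_funD; apply: measurable_funM.
pose I j := (\int[leb R d]_w (P0 w * phi w `^ (m0 - eps R j))%:E)%E.
have I0 j : (0 <= I j)%E.
  by apply: integral_ge0 => w _; rewrite lee_fin mulr_ge0 // powR_ge0.
have Ifin j : (I j < +oo)%E.
  have [k [_ [hL [Fr [Fi [hf hfin]]]] hlt]] := hsup j.
  apply: le_lt_trans hfin.
  rewrite (int_repr hg hf fF0 (mpow k)).
  apply: ge0_le_integral => //.
  - by move=> w _; rewrite lee_fin mulr_ge0 // powR_ge0.
  - by apply/measurable_EFinP; apply: measurable_funM => //; exact: mpow.
  - by apply/measurable_EFinP; apply: measurable_funM => //; exact: mpow.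
  - move=> w _; rewrite lee_fin ler_wpM2l //.
    by apply: ler_powR; [exact: phi1|exact: ltW].
pose T j := fine (I j).
have T0 j : 0 <= T j by apply: fine_ge0.
have TE j : (T j)%:E = I j by rewrite fineK // ge0_fin_numE.
pose c j : R := 1 / (2 ^ (j + 1))%:R / (T j + 1).
have c0 j : 0 < c j by rewrite /c divr_gt0 // ?divr_gt0 // ltr_wpDl.
have c1 j : c j <= 1 / (2 ^ (j + 1))%:R.
  rewrite /c ler_pdivrMr ?ltr_wpDl // ler_peMr ?divr_ge0 //.
  by rewrite lerDr.
have cT j : c j * T j <= 1 / (2 ^ (j + 1))%:R.
  rewrite /c mulrAC ler_pdivrMr ?ltr_wpDl // ler_pM2l ?divr_gt0 //.
  by rewrite lerDl.
exists (Qf c).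
split; first by move=> s _; exact: Qf_gt0.
split; first by move=> s t s0 st; exact: Qf_lt.
split; first exact: Qf_lim.
move=> Fr Fi hf.
have [mFr [mFi _]] := hf.
pose P w := Fr w ^+ 2 + Fi w ^+ 2.
have Pge0 w : 0 <= P w by rewrite addr_ge0 // sqr_ge0.
have mP : measurable_fun setT P.
  by apply: measurable_funD; apply: measurable_funM.
have Qn w : Qf c (norm2 w) = (iq c (phi w))^-1.
  by rewrite /Qf /norm2 sqr_sqrtr //; exact: dotn_ge0.
have iqm : measurable_fun setT (fun w => iq c (phi w)).
  apply: measurableT_comp mphi.
  by apply: nonincreasing_measurable => //; exact: iq_ni.
have Eint k : (\int[leb R d]_w ((P w / Qf c (norm2 w) * phi w `^ k)%:E) =
    \int[leb R d]_w ((P w * iq c (phi w) * phi w `^ k)%:E))%E.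
  by apply: eq_integral => w _; rewrite Qn invrK.
have mf2 k : measurable_fun setT (fun w => (P w * iq c (phi w) * phi w `^ k)%:E).
  apply/measurable_EFinP; apply: measurable_funM; last exact: mpow.
  exact: measurable_funM.
have iq0 w : 0 <= iq c (phi w) by apply: ltW; exact: iq_gt0.
have bbphi w : bb (phi w) = phi w by rewrite /bb max_l.
have phin0 w : phi w != 0 by rewrite gt_eqF.
split.
  rewrite (Eint m0).
  pose g j w := (c j * (P w * phi w `^ (m0 - eps R j)))%:E.
  have mg j : measurable_fun setT (g j).
    apply/measurable_EFinP; apply: measurable_funM; first exact: measurable_cst.
    by apply: measurable_funM => //; exact: mpow.
  have g0 j w : (0 <= g j w)%E.
    by rewrite /g lee_fin; apply: mulr_ge0; [exact: ltW | apply: mulr_ge0 => //; exact: powR_ge0].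
  apply: (@le_trans _ _ (\int[leb R d]_w (\sum_(j <oo) g j w))%E).
    apply: ge0_le_integral => //.
    - by move=> w _; rewrite lee_fin; apply: mulr_ge0; [exact: mulr_ge0|exact: powR_ge0].
    - have := @ge0_emeasurable_sum _ _ R setT g xpredT (fun k x _ _ => g0 k x) (fun k _ => mg k).
      by [].
    - move=> w _.
      have iqS := iq_le_fS c0 c1 (phi w).
      apply: (@le_trans _ _ ((P w * phi w `^ m0)%:E * Sser c (phi w))%E).
        rewrite -(fineK (Sser_fin c0 c1 (phi w))) -EFinM lee_fin mulrAC.
        by rewrite ler_wpM2l // mulr_ge0 // powR_ge0.
      rewrite /Sser -nneseriesZl; last by move=> n _; rewrite lee_fin ltW // term_gt0.
      rewrite le_eqVlt; apply/orP; left; apply/eqP; congr (limn _); apply/funext => n; apply: eq_bigr => k _.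
      rewrite -EFinM /g /term bbphi; congr EFin.
      rewrite powRB ?phin0 ?implybT //.
      have : phi w `^ eps R k != 0 by rewrite gt_eqF // powR_gt0.
      move=> h; field.
      by rewrite h.
  rewrite integral_nneseries //.
  apply: (@le_trans _ _ (\sum_(j <oo) (1 / (2 ^ (j + 1))%:R : R)%:E)%E); last by rewrite geo_sum1.
  apply: lee_nneseries => [n _ _|n _]; first by apply: integral_ge0 => w _; exact: g0.
  rewrite /g; under eq_integral do rewrite EFinM.
  rewrite ge0_integralZl_EFin //; last 3 first.
  - by move=> w _; rewrite lee_fin mulr_ge0 // powR_ge0.
  - by apply/measurable_EFinP; apply: measurable_funM => //; exact: mpow.
  - exact: ltW.
  rewrite (int_repr hg hf fF0 (mpow _)) -/(I n) -TE -EFinM lee_fin.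
  exact: cT.
move=> delta dpos.
pose j := Num.truncn (delta^-1).
have ej : eps R j <= delta.
  rewrite /eps -[X in _ <= X]invrK lef_pV2 ?posrE ?invr_gt0 //.
  exact: ltW (truncnS_gt _).
have Pinf : (\int[leb R d]_w (P w * phi w `^ m0)%:E = +oo)%E.
  apply/eqP; rewrite eq_le leey /= leNgt; apply/negP => hlt; apply: hnot.
  by split => //; exists Fr, Fi; split.
rewrite (Eint (m0 + delta)).
apply/eqP; rewrite -leye_eq.
have cj2 : 0 < c j / 2 by rewrite divr_gt0.
apply: (@le_trans _ _ ((c j / 2)%:E * +oo)%E).
  by rewrite gt0_muley // lte_fin.
rewrite -Pinf -ge0_integralZl_EFin //; last 3 first.
- by move=> w _; rewrite lee_fin mulr_ge0 // powR_ge0.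
- by apply/measurable_EFinP; apply: measurable_funM => //; exact: mpow.
- exact: ltW.
apply: ge0_le_integral => //.
- by move=> w _; rewrite -EFinM lee_fin; apply: mulr_ge0; [exact: ltW|apply: mulr_ge0 => //; exact: powR_ge0].
- apply: emeasurable_funM; first exact: measurable_cst.
  by apply/measurable_EFinP; apply: measurable_funM => //; exact: mpow.
- move=> w _; rewrite -EFinM lee_fin.
  have h := iq_ge c0 c1 j (phi w).
  apply: (@le_trans _ _ (P w * (term c j (phi w) / 2) * phi w `^ (m0 + delta))); last first.
    by rewrite ler_wpM2r ?powR_ge0 // ler_wpM2l.
  rewrite /term bbphi.
  have pe0 : phi w `^ eps R j != 0 by rewrite gt_eqF // powR_gt0.
  have -> : m0 + delta = (m0 + delta - eps R j) + eps R j by ring.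
  rewrite powRD ?phin0 ?implybT //.
  have -> : P w * (c j / phi w `^ eps R j / 2) *
      (phi w `^ (m0 + delta - eps R j) * phi w `^ eps R j) =
      c j / 2 * (P w * phi w `^ (m0 + delta - eps R j)).
    by field; rewrite pe0.
  rewrite ler_wpM2l ?(ltW cj2) // ler_wpM2l //.
  apply: ler_powR; first exact: phi1.
  by rewrite -addrA lerDl subr_ge0.
Qed.
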